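(* Let $G$ be a finite group with $n=|G|$, and let $f_1,f_2:G\to\{0,1\}$ be sceneries. If $A_{f_1}(x_1,\dots,x_n)=A_{f_2}(x_1,\dots,x_n)$ for all $(x_1,\dots,x_n)\in G^n$, then $f_1$ is a shift of $f_2$, i.e. there exists $g\in G$ with $f_1(k)=f_2(kg)$ for all $k\in G$.
   Context: For a scenery $f:G\to\{0,1\}$, the multispectrum (with $n$ arguments) is $A_f(x_1,\dots,x_n)=\sum_{k\in G}f(k)f(x_1k)f(x_2x_1k)\cdots f(x_n\cdots x_1k)$ for $x_1,\dots,x_n\in G$. *)

(* Defs.v *)
From mathcomp Require Import all_boot all_fingroup.
Set Implicit Arguments. Unset Strict Implicit. Unset Printing Implicit Defensive.
Local Open Scope group_scope.

(* A scenery is f : gT -> bool (bool coerces to nat: true = 1, false = 0). *)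

(* The points x_1 k, x_2 x_1 k, ..., x_n ... x_1 k for xs = [:: x_1; ...; x_n]. *)
Definition scenery_path (gT : finGroupType) (xs : seq gT) (k : gT) : seq gT :=
  scanl (fun acc x => x * acc) k xs.

Definition multispectrum (gT : finGroupType) (f : gT -> bool) (xs : seq gT) : nat :=
  (\sum_(k : gT) (f k : nat) * \prod_(y <- scenery_path xs k) (f y : nat))%N.

(* Main.v *)
Require Import Defs.
From mathcomp Require Import all_boot all_fingroup.
Set Implicit Arguments. Unset Strict Implicit. Unset Printing Implicit Defensive.
Local Open Scope group_scope.

Section Aux.
Variable gT : finGroupType.

Fixpoint diffs (p : gT) (ys : seq gT) : seq gT :=
  match ys with [::] => [::] | y :: ys' => (y * p^-1) :: diffs y ys' end.

Lemma size_diffs p ys : size (diffs p ys) = size ys.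
Proof. by elim: ys p => //= y ys IH p; rewrite IH. Qed.

Lemma path_diffs p ys k :
  scanl (fun acc x => x * acc) (p * k) (diffs p ys) = map (fun y => y * k) ys.
Proof.
elim: ys p => //= y ys IH p.
have -> : y * p^-1 * (p * k) = y * k by rewrite mulgA mulgKV.
by rewrite IH.
Qed.

Lemma prod_all (P : pred gT) s : (\prod_(y <- s) (P y : nat) = all P s)%N.
Proof. by elim: s => [|y s IH]; rewrite ?big_nil ?big_cons //= IH mulnb. Qed.

Lemma msE (f : gT -> bool) ys :
  multispectrum f (diffs 1 ys) = (\sum_k ((f k && all (fun y => f (y * k)%g) ys) : nat))%N.
Proof.
rewrite /multispectrum; apply: eq_bigr => k _.
rewrite /scenery_path; have := path_diffs 1 ys k; rewrite mul1g => ->.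
rewrite big_map.
by rewrite (prod_all (fun y => f (y * k)%g)) mulnb.
Qed.

Lemma sum_ex (b c : gT -> bool) a :
  (\sum_k (b k : nat) = \sum_k (c k : nat))%N -> b a -> exists k, c k.
Proof.
move=> E ba; apply/existsP; apply: contraLR isT => /existsPn nc.
have : (\sum_k (c k : nat) = 0)%N by apply: big1 => k _; rewrite (negbTE (nc k)).
by rewrite -E (bigD1 a) //= ba.
Qed.

Lemma sum_card (f : gT -> bool) : (\sum_k (f k : nat))%N = #|[set k | f k]|.
Proof.
rewrite -sum1_card [RHS]big_mkcond /=; apply: eq_bigr => k _.
by rewrite inE; case: (f k).
Qed.

Definition pad (ys : seq gT) := ys ++ nseq (#|gT| - size ys) 1.

Lemma size_pad ys : (size ys <= #|gT|)%N -> size (diffs 1 (pad ys)) == #|gT|.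
Proof. by move=> h; rewrite size_diffs size_cat size_nseq subnKC. Qed.

End Aux.

Theorem mainTheorem6 (gT : finGroupType) (f1 f2 : gT -> bool) :
  (forall xs : #|gT|.-tuple gT, multispectrum f1 xs = multispectrum f2 xs) ->
  exists g : gT, forall k : gT, f1 k = f2 (k * g).
Proof.
move=> H.
have HE ys : (size ys <= #|gT|)%N ->
  (\sum_k ((f1 k && all (fun y => f1 (y * k)%g) (pad ys)) : nat))%N =
  (\sum_k ((f2 k && all (fun y => f2 (y * k)%g) (pad ys)) : nat))%N.
  move=> hs; have := H (Tuple (size_pad hs)); by rewrite /= !msE.
have Hc : #|[set k | f1 k]| = #|[set k | f2 k]|.
  have := HE [::] isT; rewrite /pad /= subn0 -!sum_card.
  have Hall (f : gT -> bool) k : all (fun y => f (y * k)%g) (nseq #|gT| 1%g) = true \/ ~~ f k.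
    case fk: (f k); last by right.
    by left; apply/allP => y /nseqP [-> _]; rewrite mul1g.
  have ea (f : gT -> bool) : (\sum_k ((f k && all (fun y => f (y * k)%g) (nseq #|gT| 1%g)) : nat))%N = (\sum_k (f k : nat))%N.
    apply: eq_bigr => k _; case: (Hall f k) => [-> | /negbTE ->]; by rewrite ?andbT.
  by rewrite !ea.
case: (pickP [pred k | f1 k]) => [a /= f1a | n1].
  pose ys := [seq m * a^-1 | m <- enum [set k | f1 k]].
  have hs : (size ys <= #|gT|)%N by rewrite size_map -cardE max_card.
  have pa : f1 a && all (fun y => f1 (y * a)%g) (pad ys).
    rewrite f1a /=; apply/allP => y; rewrite mem_cat => /orP [/mapP [m]|/nseqP [-> _]].
    - by rewrite mem_enum inE => fm ->; rewrite mulgKV.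
    - by rewrite mul1g.
  have [k /andP [_ /allP Hk]] := sum_ex (HE _ hs) pa.
  exists (a^-1 * k).
  have sub : [set k | f1 k] :* (a^-1 * k) \subset [set k | f2 k].
    apply/subsetP => x; rewrite mem_rcoset inE => fx.
    have hm : x * (a^-1 * k)^-1 * a^-1 \in pad ys.
      by rewrite mem_cat; apply/orP; left; apply: (map_f (fun m => m * a^-1)); rewrite mem_enum inE.
    have := Hk _ hm; rewrite invMg invgK -!mulgA mulKVg mulVg mulg1.
    by rewrite inE.
  have eq : [set k | f1 k] :* (a^-1 * k) = [set k | f2 k].
    by apply/eqP; rewrite eqEcard sub card_rcoset Hc leqnn.
  move=> x; have := mem_rcoset [set k | f1 k] (a^-1 * k) (x * (a^-1 * k)).
  by rewrite eq mulgK !inE.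
exists 1 => k.
have e1 : [set k | f1 k] = set0 by apply/setP => x; rewrite !inE; exact: (n1 x).
have : [set k | f2 k] = set0 by apply/eqP; rewrite -cards_eq0 -Hc e1 cards0.
move/setP => /(_ k); rewrite !inE mulg1 => ->; exact: (n1 k).
Qed.
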